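(* Let $\Omega\subset\mathbb{R}^d$ ($d\in\{2,3\}$) be a domain with a Cartesian (axis-aligned) mesh $\mathcal{T}_h$ of $\Omega$ into boxes, let $\mathcal{F}_h$ be the set of its interior and boundary faces, and let $V_h$ be the discontinuous finite element space of functions whose restriction to each cell $K\in\mathcal{T}_h$ lies in $\mathbb{Q}_k$ ($k\ge 1$). Let $a_h$ be the symmetric interior penalty bilinear form $$a_h(u,v)=\sum_{K\in\mathcal{T}_h}\int_K\nabla u\cdot\nabla v\,dx+\sum_{F\in\mathcal{F}_h}\int_F\Big(\gamma_F\,[\![u]\!]\cdot[\![v]\!]-\{\nabla u\}\cdot[\![v]\!]-[\![u]\!]\cdot\{\nabla v\}\Big)\,d\sigma,$$ with any penalty values $\gamma_F>0$. Let $P_j$ be a vertex patch, i.e. the union of the cells of $\mathcal{T}_h$ sharing a given mesh vertex, and define $$V_j=\{v\in V_h:\ v=0 \text{ on every cell not contained in } P_j,\ \text{and on each cell } K\subset P_j,\ v|_K=0 \text{ and } \partial_n (v|_K)=0 \text{ on } \partial K\cap\partial P_j\},$$ where $\partial_n$ is the derivative in the direction normal to the face. Then for all $u,w\in V_h$ with $u|_K=w|_K$ for every cell $K\subset P_j$, and for all $v\in V_j$, one has $a_h(u,v)=a_h(w,v)$. In other words, the residual $b-Au$ tested against $V_j$ depends only on the values of $u$ on the cells of the patch $P_j$.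
   Context: Jumps and averages: on an interior face $F$ shared by cells $K^+$ and $K^-$ with outward unit normals $n^+$, $n^-=-n^+$ and traces $u^\pm$, set $\{u\}=\tfrac12(u^++u^-)$, $\{\nabla u\}=\tfrac12(\nabla u^++\nabla u^-)$ and $[\![u]\!]=u^+n^++u^-n^-$. On a boundary face (on $\partial\Omega$) with interior trace $u$ and outward normal $n$, set $\{\nabla u\}=\nabla u$ and $[\![u]\!]=u\,n$. $\mathbb{Q}_k$ denotes tensor-product polynomials of degree at most $k$ in each coordinate. The matrix $A$ represents $a_h$ in a basis of $V_h$ and $b$ is a right-hand side vector. *)

(* Defs.v *)
From HB Require Import structures.
From mathcomp Require Import all_boot all_order all_algebra.
From mathcomp Require Import all_classical all_reals all_analysis.
Set Implicit Arguments. Unset Strict Implicit. Unset Printing Implicit Defensive.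
Import Order.TTheory GRing.Theory Num.Theory.
Import numFieldNormedType.Exports.
Local Open Scope classical_set_scope.
Local Open Scope ring_scope.

Section SIPG.
Variables (R : realType) (d : nat).

Definition pt := 'rV[R]_d.
Definition coord (x : pt) (i : 'I_d) : R := x ord0 i.
Definition evec (i : 'I_d) : pt := delta_mx ord0 i.
Definition setc (x : pt) (i : 'I_d) (t : R) : pt :=
  \row_j (if j == i then t else coord x j).
Definition dotp (a b : pt) : R := \sum_(j < d) a ord0 j * b ord0 j.

Definition bnd (A : set pt) : set pt := closure A `\` interior A.

Record cart_mesh := CartMesh {
  cell : finType;
  lo : cell -> 'I_d -> R;
  hi : cell -> 'I_d -> R;
  lo_lt_hi : forall K i, lo K i < hi K i;
  disj_int : forall K K' x, K != K' ->
     ~ ((forall i, lo K i < coord x i < hi K i) /\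
        (forall i, lo K' i < coord x i < hi K' i))
}.

Variable M : cart_mesh.

Definition in_cell (K : cell M) (x : pt) : Prop :=
  forall i, lo K i <= coord x i <= hi K i.
(* closure of Omega = union of the cells *)
Definition mesh_set : set pt := [set x | exists K, in_cell K x].
Definition Omega : set pt := interior mesh_set.

Definition Qk (k : nat) (p : pt -> R) : Prop :=
  exists c : {ffun 'I_d -> 'I_k.+1} -> R,
    forall x, p x = \sum_(a : {ffun 'I_d -> 'I_k.+1})
                      c a * \prod_(i < d) coord x i ^+ a i.

(* discrete functions: one local polynomial per cell; u K is the
   polynomial u|_K (extended polynomially to R^d) *)
Definition dgfun := cell M -> pt -> R.
Definition in_Vh (k : nat) (u : dgfun) : Prop := forall K, Qk k (u K).

Definition partial (i : 'I_d) (f : pt -> R) (x : pt) : R := 'D_(evec i) f x.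
Definition grad (f : pt -> R) (x : pt) : pt := \row_i partial i f x.

Fixpoint iint (l : seq 'I_d) (a b : 'I_d -> R) (f : pt -> R) (x : pt) : R :=
  match l with
  | [::] => f x
  | i :: l' => Rintegral lebesgue_measure `[a i, b i]
                 (fun t => iint l' a b f (setc x i t))
  end.

Definition int_box (a b : 'I_d -> R) (f : pt -> R) : R :=
  iint (enum 'I_d) a b f 0.
(* integral over the axis-aligned (d-1)-face {x_i = c} x prod_{j<>i}[a j, b j]
   w.r.t. the surface measure *)
Definition int_face (i : 'I_d) (c : R) (a b : 'I_d -> R) (f : pt -> R) : R :=
  iint [seq j <- enum 'I_d | j != i] a b f (setc 0 i c).

(* Interior faces: Kp and Km touch along the hyperplane x_i = hi Kp i = lo Km i
   and their facets overlap in a (d-1)-dimensional box. Then n^+ = e_i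
   (outward from Kp), n^- = -e_i. *)
Definition is_iface (Kp Km : cell M) (i : 'I_d) : bool :=
  (hi Kp i == lo Km i) &&
  [forall j, (j != i) ==> (Num.max (lo Kp j) (lo Km j) < Num.min (hi Kp j) (hi Km j))].
Definition flo (Kp Km : cell M) (j : 'I_d) : R := Num.max (lo Kp j) (lo Km j).
Definition fhi (Kp Km : cell M) (j : 'I_d) : R := Num.min (hi Kp j) (hi Km j).

Definition ijump (u : dgfun) (Kp Km : cell M) (i : 'I_d) (x : pt) : pt :=
  u Kp x *: evec i + u Km x *: (- evec i).
Definition iavg (u : dgfun) (Kp Km : cell M) (x : pt) : pt :=
  2^-1 *: (grad (u Kp) x + grad (u Km) x).

(* boundary facets: facet of K with normal direction i, on the upper side if
   s = true; outward normal n; the boundary face is (facet) \cap bnd Omega *)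
Definition bnormal (i : 'I_d) (s : bool) : pt := (if s then 1 else -1) *: evec i.
Definition blevel (K : cell M) (i : 'I_d) (s : bool) : R :=
  if s then hi K i else lo K i.

Definition a_h (gI : cell M -> cell M -> 'I_d -> R) (gB : cell M -> 'I_d -> bool -> R)
    (u v : dgfun) : R :=
  \sum_(K : cell M) int_box (lo K) (hi K) (fun x => dotp (grad (u K) x) (grad (v K) x))
  + \sum_(Kp : cell M) \sum_(Km : cell M) \sum_(i < d)
      (if is_iface Kp Km i then
         int_face i (hi Kp i) (flo Kp Km) (fhi Kp Km) (fun x =>
           gI Kp Km i * dotp (ijump u Kp Km i x) (ijump v Kp Km i x)
           - dotp (iavg u Kp Km x) (ijump v Kp Km i x)
           - dotp (ijump u Kp Km i x) (iavg v Kp Km x))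
       else 0)
  + \sum_(K : cell M) \sum_(i < d) \sum_(s : bool)
      int_face i (blevel K i s) (lo K) (hi K) (fun x =>
        \1_(bnd Omega) x *
        (gB K i s * dotp (u K x *: bnormal i s) (v K x *: bnormal i s)
         - dotp (grad (u K) x) (v K x *: bnormal i s)
         - dotp (u K x *: bnormal i s) (grad (v K) x))).

Definition is_vertex_of (K : cell M) (z : pt) : Prop :=
  forall i, coord z i = lo K i \/ coord z i = hi K i.
Definition mesh_vertex (z : pt) : Prop := exists K, is_vertex_of K z.
(* cells of the patch of z (the cells K with K \subset P_j) *)
Definition in_patch (z : pt) (K : cell M) : Prop := is_vertex_of K z.
Definition patch_set (z : pt) : set pt :=
  [set x | exists K, in_patch z K /\ in_cell K x].

Definition in_Vj (k : nat) (z : pt) (v : dgfun) : Prop :=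
  in_Vh k v /\
  (forall K, ~ in_patch z K -> forall x, in_cell K x -> v K x = 0) /\
  (forall K, in_patch z K -> forall x, in_cell K x -> bnd (patch_set z) x ->
     v K x = 0 /\
     (forall i, (coord x i = lo K i \/ coord x i = hi K i) ->
        partial i (v K) x = 0)).

End SIPG.

(* Main.v *)
Set Warnings "-all".
Require Import Defs.
From HB Require Import structures.
From mathcomp Require Import all_boot all_order all_algebra.
From mathcomp Require Import all_classical all_reals all_analysis.
From mathcomp Require Import ring lra.
Import Order.TTheory GRing.Theory Num.Theory.
Import numFieldNormedType.Exports.
Local Open Scope classical_set_scope.
Local Open Scope ring_scope.
Section L.
Variables (R : realType) (d : nat).
Local Notation pt := (pt R d).

Lemma diff_bigsum (I : eqType) (r : seq I) (P : pred I) (F : I -> pt -> R) (x : pt) :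
  (forall a, differentiable (F a) x) ->
  differentiable (fun y => \sum_(a <- r | P a) F a y) x.
Proof.
move=> HF; elim: r => [|a r IH].
  have -> : (fun y : pt => \sum_(a <- [::] | P a) F a y) = cst 0.
    by apply/funext => y; rewrite big_nil.
  exact: differentiable_cst.
case Pa: (P a).
  have -> : (fun y : pt => \sum_(b <- a :: r | P b) F b y) =
     (F a + (fun y => \sum_(b <- r | P b) F b y)).
    by apply/funext => y; rewrite big_cons Pa.
  exact: differentiableD.
have -> : (fun y : pt => \sum_(b <- a :: r | P b) F b y) =
     (fun y => \sum_(b <- r | P b) F b y).
  by apply/funext => y; rewrite big_cons Pa.
exact: IH.
Qed.

Lemma diff_bigprod (I : eqType) (r : seq I) (P : pred I) (F : I -> pt -> R) (x : pt) :
  (forall a, differentiable (F a) x) ->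
  differentiable (fun y => \prod_(a <- r | P a) F a y) x.
Proof.
move=> HF; elim: r => [|a r IH].
  have -> : (fun y : pt => \prod_(a <- [::] | P a) F a y) = cst 1.
    by apply/funext => y; rewrite big_nil.
  exact: differentiable_cst.
case Pa: (P a).
  have -> : (fun y : pt => \prod_(b <- a :: r | P b) F b y) =
     (F a * (fun y => \prod_(b <- r | P b) F b y)).
    by apply/funext => y; rewrite big_cons Pa.
  exact: differentiableM.
have -> : (fun y : pt => \prod_(b <- a :: r | P b) F b y) =
     (fun y => \prod_(b <- r | P b) F b y).
  by apply/funext => y; rewrite big_cons Pa.
exact: IH.
Qed.

Lemma diff_coordX (i : 'I_d) (n : nat) (x : pt) :
  differentiable (fun y : pt => Defs.coord y i ^+ n) x.
Proof.
case: n => [|n].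
  have -> : (fun y : pt => Defs.coord y i ^+ 0) = cst 1 by apply/funext.
  exact: differentiable_cst.
have -> : (fun y : pt => Defs.coord y i ^+ n.+1) = (fun y : pt => Defs.coord y i) ^+ n.+1.
  by rewrite exprfctE.
apply: differentiableX; exact: (@differentiable_coord R 1 d x ord0 i).
Qed.

Lemma Qk_diff k (p : pt -> R) x : Qk k p -> differentiable p x.
Proof.
move=> [c Hc].
have -> : p = (fun y => \sum_(a : {ffun 'I_d -> 'I_k.+1})
                      c a * \prod_(i < d) Defs.coord y i ^+ a i).
  by apply/funext => y; rewrite Hc.
apply: diff_bigsum => a.
have -> : (fun y : pt => c a * \prod_(i < d) Defs.coord y i ^+ a i) =
   (cst (c a) * (fun y => \prod_(i < d) Defs.coord y i ^+ a i)) by apply/funext.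
apply: differentiableM; first exact: differentiable_cst.
apply: diff_bigprod => i; exact: diff_coordX.
Qed.


Lemma D_side (F : set_system R) (FF : ProperFilter F) (f g : pt -> R) y v :
  F `=>` (0:R)^' ->
  derivable f y v -> derivable g y v -> f y = g y ->
  (\forall h \near F, f (h *: v + y) = g (h *: v + y)) ->
  'D_v f y = 'D_v g y.
Proof.
move=> inc df dg fg hn.
set Q := fun (f : pt -> R) h => h^-1 *: ((f \o shift y) (h *: v) - f y).
have Hf : Q f @ F --> 'D_v f y.
  by apply: cvg_trans (cvg_app _ inc) _; exact: df.
have Hg : Q g @ F --> 'D_v g y.
  by apply: cvg_trans (cvg_app _ inc) _; exact: dg.
have Hfg : Q g @ F --> 'D_v f y.
  apply: cvg_trans Hf; apply: near_eq_cvg; apply: filterS hn => h /= E.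
  rewrite /Q /= -E fg //.
exact: (cvg_unique _ Hfg Hg).
Qed.

Lemma right_inc : (0:R)^'+ `=>` (0:R)^'.
Proof.
move=> A /=; rewrite /dnbhs /within /= => H.
rewrite /at_right /within /=; apply: filterS H => x Hx x0; apply: Hx.
exact: lt0r_neq0.
Qed.
Lemma left_inc : (0:R)^'- `=>` (0:R)^'.
Proof.
move=> A /=; rewrite /dnbhs /within /= => H.
rewrite /at_left /within /=; apply: filterS H => x Hx x0; apply: Hx.
exact: ltr0_neq0.
Qed.


Lemma coord_shift (i j : 'I_d) (h : R) (y : pt) :
  Defs.coord (h *: evec R i + y) j = (if j == i then h else 0) + Defs.coord y j.
Proof.
rewrite /Defs.coord /evec !mxE eqxx /=.
by case: eqP => _; rewrite ?mulr1 ?mulr0.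
Qed.

Lemma partial_eq (M : cart_mesh R d) (K : cell M) (f g : pt -> R) (y : pt) i :
  (forall x, differentiable f x) -> (forall x, differentiable g x) ->
  in_cell K y -> (forall x, in_cell K x -> f x = g x) ->
  partial i f y = partial i g y.
Proof.
move=> df dg yK fg.
have fgy := fg _ yK.
have key : forall h, lo K i <= h + Defs.coord y i <= hi K i ->
    f (h *: evec R i + y) = g (h *: evec R i + y).
  move=> h Hh; apply: fg => j; rewrite coord_shift.
  by case: eqP => [->|_] //; rewrite add0r; exact: yK.
have /andP[yl yh] := yK i.
have lh := lo_lt_hi K i.
have d1 : derivable f y (evec R i) by apply: diff_derivable.
have d2 : derivable g y (evec R i) by apply: diff_derivable.
case: (ltP (Defs.coord y i) (hi K i)) => yhi.
  have HN : \forall h \near 0^'+, f (h *: evec R i + y) = g (h *: evec R i + y).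
    near=> h; apply: key.
    have h0 : 0 < h by near: h; exact: nbhs_right_gt.
    have h1 : h < hi K i - Defs.coord y i.
      by near: h; apply: nbhs_right_lt; rewrite subr_gt0.
    apply/andP; split; lra.
  exact: (@D_side _ _ f g y (evec R i) right_inc d1 d2 fgy HN).
have HN : \forall h \near 0^'-, f (h *: evec R i + y) = g (h *: evec R i + y).
  near=> h; apply: key.
  have h0 : h < 0 by near: h; exact: nbhs_left_lt.
  have h1 : lo K i - Defs.coord y i < h.
    by near: h; apply: nbhs_left_gt; rewrite subr_lt0; lra.
  apply/andP; split; lra.
exact: (@D_side _ _ f g y (evec R i) left_inc d1 d2 fgy HN).
Unshelve. all: by end_near.
Qed.


Lemma coord_setc (x : pt) i t j :
  Defs.coord (setc x i t) j = if j == i then t else Defs.coord x j.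
Proof. by rewrite /Defs.coord /setc mxE. Qed.

Lemma iint_eq (l : seq 'I_d) a b (f g : pt -> R) x :
  (forall y, (forall j, j \in l -> a j <= Defs.coord y j <= b j) ->
     (forall j, j \notin l -> Defs.coord y j = Defs.coord x j) -> f y = g y) ->
  iint l a b f x = iint l a b g x.
Proof.
elim: l x => [|i l IH] x H /=.
  by apply: H => // j _; rewrite in_nil.
apply: eq_Rintegral => t tin.
have /andP[t1 t2] : a i <= t <= b i.
  by move: tin; rewrite inE /= in_itv /=.
apply: IH => y H1 H2; apply: H => j.
  rewrite in_cons => /orP[/eqP->|jl]; last exact: H1.
  case: (boolP (i \in l)) => il; first exact: H1.
  by rewrite H2 // coord_setc eqxx t1 t2.
rewrite in_cons negb_or => /andP[ji jl].
by rewrite H2 // coord_setc (negbTE ji).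
Qed.


Lemma not_in_two (M : cart_mesh R d) (K K' : cell M) (p : pt) : K != K' ->
  (forall j, lo K j < Defs.coord p j < hi K j) -> in_cell K' p -> False.
Proof.
move=> nKK' pK pK'.
pose c j := (lo K' j + hi K' j) / 2.
pose m j := Num.min (Defs.coord p j - lo K j) (hi K j - Defs.coord p j).
pose D j := `|c j - Defs.coord p j|.
pose S := \sum_(j < d) D j / m j.
pose del := (1 + S)^-1.
have m0 : forall j, 0 < m j.
  move=> j; have /andP[h1 h2] := pK j; rewrite /m lt_min; apply/andP; split; lra.
have S0 : 0 <= S by apply: sumr_ge0 => j _; apply: divr_ge0; [exact: normr_ge0 | exact: ltW (m0 _)].
have DS : forall j, D j <= S * m j.
  move=> j; rewrite -(ler_pdivrMr _ _ (m0 j)); rewrite /S (bigD1 j) //= lerDl.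
  by apply: sumr_ge0 => l _; apply: divr_ge0; [exact: normr_ge0 | exact: ltW (m0 _)].
have del0 : 0 < del by rewrite /del invr_gt0; lra.
have delS : del * (1 + S) = 1 by rewrite /del mulVf //; lra.
have del1 : del <= 1.
  have : del * S >= 0 by apply: mulr_ge0 => //; exact: ltW.
  lra.
have dD : forall j, del * D j < m j.
  move=> j; have := DS j; have := m0 j => hm hd.
  have : del * D j <= del * (S * m j) by apply: ler_wpM2l => //; exact: ltW.
  have e1 : (del * (1 + S) - 1) * m j = 0 by rewrite delS subrr mul0r.
  have e2 : 0 < del * m j by apply: mulr_gt0.
  lra.
have Dn : forall j, `|del * (c j - Defs.coord p j)| = del * D j.
  by move=> j; rewrite normrM gtr0_norm.
pose q : pt := \row_j (Defs.coord p j + del * (c j - Defs.coord p j)).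
have cq : forall j, Defs.coord q j = Defs.coord p j + del * (c j - Defs.coord p j).
  by move=> j; rewrite /Defs.coord mxE.
apply: (disj_int nKK' (x := q)); split => j; rewrite cq.
  have /andP[h1 h2] := pK j.
  have a1 := ler_norm (del * (c j - Defs.coord p j)).
  have a2 := ler_norm (- (del * (c j - Defs.coord p j))).
  rewrite normrN Dn in a2; rewrite Dn in a1.
  have := dD j.
  have b1 : m j <= Defs.coord p j - lo K j by rewrite /m ge_min lexx.
  have b2 : m j <= hi K j - Defs.coord p j by rewrite /m ge_min lexx orbT.
  move=> h3; apply/andP; split; lra.
have /andP[h1 h2] := pK' j.
have l := lo_lt_hi K' j.
have f1 : 0 <= (1 - del) * (Defs.coord p j - lo K' j) by apply: mulr_ge0; lra.
have f2 : 0 <= (1 - del) * (hi K' j - Defs.coord p j) by apply: mulr_ge0; lra.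
have f3 : 0 < del * (c j - lo K' j) by apply: mulr_gt0 => //; rewrite /c; lra.
have f4 : 0 < del * (hi K' j - c j) by apply: mulr_gt0 => //; rewrite /c; lra.
apply/andP; split; lra.
Qed.


Lemma face_bnd (M : cart_mesh R d) (z : pt) (Kp Km : cell M) (y : pt) :
  in_patch z Kp -> ~ in_patch z Km -> in_cell Kp y -> in_cell Km y ->
  bnd (patch_set M z) y.
Proof.
move=> pKp npKm yKp yKm; split.
  by apply: subset_closure; exists Kp.
move=> /nbhs_ballP[e /= e0 He].
pose c : pt := \row_j ((lo Km j + hi Km j) / 2).
pose N := `|y - c|.
pose eps := e / (e + 2 * N + 2).
have N0 : 0 <= N by exact: normr_ge0.
have eps0 : 0 < eps by rewrite /eps divr_gt0 //; lra.
have eps1 : eps < 1 by rewrite /eps ltr_pdivrMr; lra.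
have epsN : eps * N < e.
  rewrite /eps mulrC mulrA ltr_pdivrMr; last lra.
  have : 0 < e * e by apply: mulr_gt0.
  have : 0 <= e * N by apply: mulr_ge0 => //; exact: ltW.
  lra.
pose p : pt := y + eps *: (c - y).
have : patch_set M z p.
  apply: He; rewrite -ball_normE /ball_ /= /p opprD addrA subrr add0r normrN.
  by rewrite normrZ gtr0_norm // -normrN opprB.
move=> [K'' [pK'' p''']].
have nK : Km != K'' by apply/eqP => E; apply: npKm; rewrite E.
apply: (@not_in_two M Km K'' p nK _ p''') => j.
rewrite /p /Defs.coord !mxE -/(Defs.coord y j).
have /andP[h1 h2] := yKm j.
have l := lo_lt_hi Km j.
have f1 : 0 <= (1 - eps) * (Defs.coord y j - lo Km j) by apply: mulr_ge0; lra.
have f2 : 0 <= (1 - eps) * (hi Km j - Defs.coord y j) by apply: mulr_ge0; lra.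
have f3 : 0 < eps * ((lo Km j + hi Km j) / 2 - lo Km j) by apply: mulr_gt0 => //; lra.
have f4 : 0 < eps * (hi Km j - (lo Km j + hi Km j) / 2) by apply: mulr_gt0 => //; lra.
apply/andP; split; lra.
Qed.


Lemma int_box_eq a b (f g : pt -> R) :
  (forall y, (forall j, a j <= Defs.coord y j <= b j) -> f y = g y) ->
  int_box a b f = int_box a b g.
Proof.
move=> H; apply: iint_eq => y H1 _; apply: H => j; apply: H1; exact: mem_enum.
Qed.

Lemma int_face_eq i c a b (f g : pt -> R) :
  (forall y, Defs.coord y i = c -> (forall j, j != i -> a j <= Defs.coord y j <= b j) ->
     f y = g y) ->
  int_face i c a b f = int_face i c a b g.
Proof.
move=> H; apply: iint_eq => y H1 H2; apply: H.
  have := H2 i; rewrite mem_filter eqxx /= coord_setc eqxx; exact.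
move=> j ji; apply: H1; by rewrite mem_filter ji mem_enum.
Qed.

Lemma dotp0 (a : pt) : dotp a 0 = 0.
Proof. by rewrite /dotp big1 // => j _; rewrite mxE mulr0. Qed.
Lemma dot0p (a : pt) : dotp 0 a = 0.
Proof. by rewrite /dotp big1 // => j _; rewrite mxE mul0r. Qed.

Lemma dotp_evec (s : R) i (b : pt) : dotp (s *: evec R i) b = s * b ord0 i.
Proof.
rewrite /dotp (bigD1 i) //= big1 ?addr0; first by rewrite !mxE !eqxx mulr1.
by move=> j ji; rewrite !mxE (negbTE ji) /= mulr0 mul0r.
Qed.

Lemma grad_eq (M : cart_mesh R d) (K : cell M) (f g : pt -> R) y :
  (forall x, differentiable f x) -> (forall x, differentiable g x) ->
  in_cell K y -> (forall x, in_cell K x -> f x = g x) -> grad f y = grad g y.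
Proof.
move=> df dg yK fg; apply/rowP => i; rewrite !mxE; exact: (@partial_eq M K f g y i df dg yK fg).
Qed.

Lemma grad_zero (M : cart_mesh R d) (K : cell M) (f : pt -> R) y :
  (forall x, differentiable f x) ->
  in_cell K y -> (forall x, in_cell K x -> f x = 0) -> grad f y = 0.
Proof.
move=> df yK f0.
rewrite (@grad_eq M K f (fun _ => 0) y df _ yK f0); last by move=> x; exact: differentiable_cst.
apply/rowP => i; rewrite !mxE /partial; exact: (derive_cst (0:R)).
Qed.

End L.

Theorem mainTheorem1 (R : realType) (d : nat) (M : cart_mesh R d) (k : nat)
    (gI : cell M -> cell M -> 'I_d -> R) (gB : cell M -> 'I_d -> bool -> R)
    (z : pt R d) (u w v : dgfun M) :
  (d = 2%N \/ d = 3%N) ->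
  (1 <= k)%N ->
  Omega M !=set0 -> connected (Omega M) ->
  (forall Kp Km i, 0 < gI Kp Km i) ->
  (forall K i s, 0 < gB K i s) ->
  mesh_vertex M z ->
  in_Vh k u -> in_Vh k w ->
  (forall K, in_patch z K -> forall x, in_cell K x -> u K x = w K x) ->
  in_Vj k z v ->
  a_h gI gB u v = a_h gI gB w v.
Proof.
move=> _ _ _ _ _ _ _ Hu Hw Huw [Hv [Hv0 Hvb]].
have du : forall K x, differentiable (u K) x := fun K x => @Qk_diff R d k (u K) x (Hu K).
have dw : forall K x, differentiable (w K) x := fun K x => @Qk_diff R d k (w K) x (Hw K).
have dv : forall K x, differentiable (v K) x := fun K x => @Qk_diff R d k (v K) x (Hv K).
have PA : forall K, in_patch z K -> forall y, in_cell K y ->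
    u K y = w K y /\ grad (u K) y = grad (w K) y.
  move=> K pK y yK; split; first exact: Huw.
  exact: (@grad_eq R d M K (u K) (w K) y (du K) (dw K) yK (Huw K pK)).
have PB : forall K, ~ in_patch z K -> forall y, in_cell K y ->
    v K y = 0 /\ grad (v K) y = 0.
  move=> K pK y yK; split; first exact: Hv0.
  exact: (@grad_zero R d M K (v K) y (dv K) yK (Hv0 K pK)).
have IJ : forall (u' : dgfun M) Kp Km i y,
    ijump u' Kp Km i y = (u' Kp y - u' Km y) *: evec R i.
  by move=> u' Kp Km i y; rewrite /Defs.ijump scalerBl scalerN.
rewrite /a_h; congr (_ + _ + _).
- apply: eq_bigr => K _; apply: int_box_eq => y yK.
  have yK' : in_cell K y := yK.
  case: (pselect (in_patch z K)) => pK.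
    by have [_ ->] := PA K pK y yK'.
  by have [_ ->] := PB K pK y yK'; rewrite !dotp0.
- apply: eq_bigr => Kp _; apply: eq_bigr => Km _; apply: eq_bigr => i _.
  case: ifP => // /andP[/eqP hl /forallP hf].
  apply: int_face_eq => y yi yj.
  have yKp : in_cell Kp y.
    move=> j; case: (eqVneq j i) => [->|ji].
      rewrite yi; have l := lo_lt_hi Kp i; apply/andP; split; [exact: ltW | exact: lexx].
    have /andP[h1 h2] := yj j ji; move: h1 h2.
    rewrite /flo /fhi ge_max le_min => /andP[a1 a2] /andP[b1 b2].
    by apply/andP; split.
  have yKm : in_cell Km y.
    move=> j; case: (eqVneq j i) => [->|ji].
      rewrite yi hl; have l := lo_lt_hi Km i; apply/andP; split; [exact: lexx | exact: ltW].
    have /andP[h1 h2] := yj j ji; move: h1 h2.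
    rewrite /flo /fhi ge_max le_min => /andP[a1 a2] /andP[b1 b2].
    by apply/andP; split.
  case: (pselect (in_patch z Kp)) => pKp; case: (pselect (in_patch z Km)) => pKm.
  + have [e1 g1] := PA Kp pKp y yKp; have [e2 g2] := PA Km pKm y yKm.
    by rewrite /= /Defs.ijump /Defs.iavg e1 e2 g1 g2.
  + have bd := @face_bnd R d M z Kp Km y pKp pKm yKp yKm.
    have [v1 dv1] := Hvb Kp pKp y yKp bd.
    have dvi := dv1 i (or_intror yi).
    have [v2 g2] := PB Km pKm y yKm.
    have J : ijump v Kp Km i y = 0 by rewrite /Defs.ijump v1 v2 !scale0r addr0.
    have A : Defs.iavg v Kp Km y ord0 i = 0.
      by rewrite /Defs.iavg g2 addr0 !mxE dvi mulr0.
    by rewrite /= J !dotp0 !IJ !dotp_evec A !mulr0.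
  + have bd := @face_bnd R d M z Km Kp y pKm pKp yKm yKp.
    have [v1 dv1] := Hvb Km pKm y yKm bd.
    have dvi := dv1 i (or_introl (etrans yi hl)).
    have [v2 g2] := PB Kp pKp y yKp.
    have J : ijump v Kp Km i y = 0 by rewrite /Defs.ijump v1 v2 !scale0r addr0.
    have A : Defs.iavg v Kp Km y ord0 i = 0.
      by rewrite /Defs.iavg g2 add0r !mxE dvi mulr0.
    by rewrite /= J !dotp0 !IJ !dotp_evec A !mulr0.
  + have [v1 g1] := PB Kp pKp y yKp; have [v2 g2] := PB Km pKm y yKm.
    have J : ijump v Kp Km i y = 0 by rewrite /Defs.ijump v1 v2 !scale0r addr0.
    have A : Defs.iavg v Kp Km y = 0 by rewrite /Defs.iavg g1 g2 addr0 scaler0.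
    by rewrite /= J A !dotp0.
- apply: eq_bigr => K _; apply: eq_bigr => i _; apply: eq_bigr => s _.
  apply: int_face_eq => y yi yj.
  have yK : in_cell K y.
    move=> j; case: (eqVneq j i) => [->|ji]; last exact: yj.
    rewrite yi /blevel; have l := lo_lt_hi K i.
    by case: s {yi}; apply/andP; split; rewrite ?lexx // ltW.
  case: (pselect (in_patch z K)) => pK.
    by have [e1 g1] := PA K pK y yK; rewrite /= e1 g1.
  have [v1 g1] := PB K pK y yK.
  by rewrite /= v1 g1 scale0r !dotp0.
Qed.
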